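(* Let $K_1,K_2$ be nonempty finite simplicial complexes (each having at least one vertex) on disjoint vertex sets, let $i\ge 0$, and let $K=K_1*K_2$ be their join. If $\dim K_1+\dim K_2\ge i+1$, then $B_i(K)$ is unbalanced.
   Context: The join $K_1*K_2$ is the complex on $V(K_1)\cup V(K_2)$ whose faces are $F_1\cup F_2$ with $F_1\in K_1$, $F_2\in K_2$. The dimension of a complex is the maximum of $|F|-1$ over its faces. $S_j(K)$ is the set of faces of cardinality $j+1$. For an oriented complex $K$ (orientation: ordering of each face up to even permutations), $B_i(K)$ is the signed bipartite graph on $S_i(K)\cup S_{i+1}(K)$ with edges $\{G,\bar G\}$ for $G\subset\bar G$, signed by the boundary incidence sign $\mathrm{sgn}([G],\partial[\bar G])\in\{\pm1\}$ ($(-1)^j$ if $G$ is $\bar G$ minus its $j$-th vertex with agreeing orientation, negated otherwise). A signed graph is balanced if every cycle has positive sign product; this property of $B_i(K)$ is independent of the orientation. *)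

(* Defs.v *)
From mathcomp Require Import all_boot.
Set Implicit Arguments. Unset Strict Implicit. Unset Printing Implicit Defensive.

Section SC.
Variable V : finType.

Definition is_complex (K : {set {set V}}) : Prop :=
  set0 \in K /\ (forall F G : {set V}, F \in K -> G \subset F -> G \in K).

Definition vertices (K : {set {set V}}) : {set V} := \bigcup_(F in K) F.

Definition has_vertex (K : {set {set V}}) : Prop := exists v : V, [set v] \in K.

Definition join (K1 K2 : {set {set V}}) : {set {set V}} :=
  [set F1 :|: F2 | F1 in K1, F2 in K2].

(* dimension: max |F| - 1 over faces (a nat; meaningful when K has a vertex) *)
Definition dim (K : {set {set V}}) : nat := (\max_(F in K) #|F|).-1.

Definition faces_of_size (j : nat) (K : {set {set V}}) : {set {set V}} :=
  [set F in K | #|F| == j.+1].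

(* An orientation of K: an ordering of the vertices of each face
   (considered up to even permutations, see [agree]). *)
Definition is_orientation (K : {set {set V}}) (ord : {set V} -> seq V) : Prop :=
  forall F, F \in K -> perm_eq (ord F) (enum F).

Definition inv_count (s t : seq V) : nat :=
  #|[set p : V * V | [&& p.1 \in s, p.2 \in s,
                        index p.1 s < index p.2 s & index p.2 t < index p.1 t]]|.

(* two orderings of the same set define the same orientation
   (they differ by an even permutation) *)
Definition agree (s t : seq V) : bool := ~~ odd (inv_count s t).

(* boundary incidence sign sgn([G], d[Gbar]) for G = Gbar minus one vertex,
   encoded as a boolean: true means sign -1.
   If v is the j-th vertex of Gbar (0-based) in its orientation, the sign is
   (-1)^j when the induced ordering of G agrees with ord G, and -(-1)^j otherwise. *)
Definition incid_neg (ord : {set V} -> seq V) (G Gbar : {set V}) : bool :=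
  [exists v : V, [&& v \in Gbar, G == Gbar :\ v &
     odd (index v (ord Gbar)) (+) ~~ agree (rem v (ord Gbar)) (ord G)]].

Definition Badj (K : {set {set V}}) (i : nat) (F H : {set V}) : bool :=
  ((F \in faces_of_size i K) && (H \in faces_of_size i.+1 K) && (F \subset H)) ||
  ((H \in faces_of_size i K) && (F \in faces_of_size i.+1 K) && (H \subset F)).

(* sign of the edge {F,H} of B_i(K) (true = negative) *)
Definition Bneg (ord : {set V} -> seq V) (K : {set {set V}}) (i : nat)
    (F H : {set V}) : bool :=
  if F \in faces_of_size i K then incid_neg ord F H else incid_neg ord H F.

(* B_i(K) (with orientation ord) is balanced: every cycle (a closed walk
   through at least 3 pairwise distinct vertices) has positive sign product,
   i.e. an even number of negative edges. *)
Definition balanced (K : {set {set V}}) (i : nat) (ord : {set V} -> seq V) : Prop :=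
  forall c : seq {set V}, uniq c -> 3 <= size c -> cycle (Badj K i) c ->
    ~~ odd (count (fun F => Bneg ord K i F (next c F)) c).

End SC.

(* Main.v *)
Require Import Defs.
From mathcomp Require Import all_boot.
Set Implicit Arguments. Unset Strict Implicit. Unset Printing Implicit Defensive.

Section Par.
Variable V : finType.
Implicit Types s t u : seq V.

Definition bef s (x y : V) := index x s < index y s.
Definition rk (p : V * V) := (enum_rank p.1 < enum_rank p.2)%N.
Definition Xp s t : bool :=
  \big[addb/false]_(p : V * V | rk p)
     [&& p.1 \in s, p.2 \in s & bef s p.1 p.2 != bef t p.1 p.2].

Lemma befN s x y : x \in s -> y \in s -> x != y -> bef s y x = ~~ bef s x y.
Proof.
move=> xs ys nxy; rewrite /bef ltn_neqAle -leqNgt; case: eqP => //= E.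
by case/eqP: nxy; rewrite -(nth_index x xs) -(nth_index x ys) E.
Qed.

Lemma odd_card (T : finType) (A : {set T}) :
  odd #|A| = \big[addb/false]_(p : T) (p \in A).
Proof.
rewrite -sum1_card (big_morph odd oddD (erefl (odd 0))) [RHS](bigID (mem A)) /=.
rewrite [X in _ = _ (+) X]big1 ?addbF; last by move=> p /negbTE.
by apply: eq_bigr => p ->.
Qed.

Lemma rk_neq (p : V * V) : rk p -> p.1 != p.2.
Proof. by rewrite /rk; apply: contraTneq => ->; rewrite ltnn. Qed.

Lemma invX s t : perm_eq s t -> odd (inv_count s t) = Xp s t.
Proof.
move=> st; rewrite /inv_count odd_card.
rewrite (bigID rk) /=.
have swi : injective (fun p : V * V => (p.2, p.1)) by move=> [? ?] [? ?] [-> ->].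
rewrite [X in _ (+) X](reindex_inj swi) /=.
rewrite [X in _ (+) X](bigID (fun p : V * V => p.1 == p.2)) /=.
rewrite [X in _ (+) (X (+) _)]big1; last first.
  move=> [x y] /= /andP [_ /eqP ->]; rewrite inE /= /bef ltnn; by rewrite !andbF.
rewrite /= (@eq_bigl _ _ _ _ _ (fun p : V * V => ~~ rk (p.2, p.1) && (p.1 != p.2)) rk); last first.
  move=> [x y]; rewrite /rk /=.
  case: (ltngtP (enum_rank x) (enum_rank y)) => //= E.
    by apply/eqP => exy; move: E; rewrite exy ltnn.
  by move/val_inj: E => /enum_rank_inj ->; rewrite eqxx.
rewrite -big_split /=; apply: eq_bigr => [[x y]] /= /rk_neq /= nxy.
rewrite !inE /=.
case xs: (x \in s); case ys: (y \in s) => //=.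
have xt : x \in t by rewrite -(perm_mem st).
have yt : y \in t by rewrite -(perm_mem st).
move: (befN xs ys nxy) (befN xt yt nxy); rewrite /bef => -> ->.
by case: (index x s < index y s); case: (index x t < index y t).
Qed.

Lemma XT s t u : perm_eq s t -> perm_eq t u -> Xp s u = Xp s t (+) Xp t u.
Proof.
move=> st tu; rewrite /Xp -big_split /=; apply: eq_bigr => [[x y]] _ /=.
rewrite -!(perm_mem st).
by case: (x \in s); case: (y \in s) => //=; case: (bef s x y); case: (bef t x y); case: (bef u x y).
Qed.

Lemma Xss s : Xp s s = false.
Proof. by rewrite /Xp big1 // => p _; rewrite eqxx !andbF. Qed.

Lemma bef_rem v s x y : x != v -> y != v -> bef (rem v s) x y = bef s x y.
Proof.
move=> xv yv; rewrite /bef; elim: s => //= w s IH.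
case: (w =P v) => [->|_].
  by rewrite /= eq_sym (negbTE xv) eq_sym (negbTE yv) ltnS.
by rewrite /=; case: (w == x); case: (w == y).
Qed.

Lemma cnt_before s v : uniq s -> v \in s ->
  \big[addb/false]_(x | x != v) ((x \in s) && bef s x v) = odd (index v s).
Proof.
move=> us vs.
have -> : \big[addb/false]_(x | x != v) ((x \in s) && bef s x v) =
          \big[addb/false]_(x : V) (x \in [set y in take (index v s) s]).
  rewrite [RHS](bigID (fun x => x != v)) /= [X in _ = _ (+) X]big1 ?addbF; last first.
    by move=> x /negPn /eqP ->; rewrite inE in_take // ltnn.
  apply: eq_bigr => x _; rewrite inE; case xs: (x \in s); last first.
    by apply/esym/negbTE; apply: contraFN xs; apply: mem_take.
  by rewrite in_take.
rewrite -odd_card; congr odd.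
rewrite cardsE (card_uniqP _) ?take_uniq // size_take.
by rewrite index_mem vs.
Qed.

Lemma vsplit v (F : V * V -> bool) :
  \big[addb/false]_(p | rk p && ((p.1 == v) || (p.2 == v))) F p =
  \big[addb/false]_(x | rk (v, x)) F (v, x) (+)
  \big[addb/false]_(x | rk (x, v)) F (x, v).
Proof.
rewrite (bigID (fun p : V * V => p.1 == v)) /=.
have -> : \big[addb/false]_(p | (rk p && ((p.1 == v) || (p.2 == v))) && (p.1 == v)) F p
    = \big[addb/false]_(i | i == v) \big[addb/false]_(j | rk (i, j)) F (i, j).
  rewrite pair_big_dep; apply: eq_big => [[x y]|[x y] _] //=.
  by case: (x =P v) => [->|_]; rewrite ?eqxx ?andbT ?andbF.
have -> : \big[addb/false]_(p | (rk p && ((p.1 == v) || (p.2 == v))) && (p.1 != v)) F p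
    = \big[addb/false]_(i | rk (i, v)) \big[addb/false]_(j | j == v) F (i, j).
  rewrite pair_big_dep; apply: eq_big => [[x y]|[x y] _] //=.
  case: (x =P v) => [->|_]; case: (y =P v) => [->|_]; rewrite ?andbT ?andbF ?orbF ?orbT //=.
  by rewrite /rk /= ltnn.
rewrite big_pred1_eq; congr addb; apply: eq_bigr => x _.
by rewrite big_pred1_eq.
Qed.

Lemma XR s t v : uniq s -> v \in s -> perm_eq s t ->
  Xp s t = odd (index v s) (+) odd (index v t) (+) Xp (rem v s) (rem v t).
Proof.
move=> us vs st.
have ut : uniq t by rewrite -(perm_uniq st).
have vt : v \in t by rewrite -(perm_mem st).
have memr u x : uniq u -> x != v -> (x \in rem v u) = (x \in u).
  by move=> uu xv; rewrite (mem_rem_uniq _ uu) inE xv.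
rewrite /Xp (bigID (fun p : V * V => (p.1 == v) || (p.2 == v))) /=.
rewrite [in RHS](bigID (fun p : V * V => (p.1 == v) || (p.2 == v))) /=.
rewrite [X in _ = _ (+) (X (+) _)]big1 ?addFb; last first.
  move=> [x y] /andP [_] /orP [] /eqP /= ->; by rewrite ?mem_rem_uniqF ?andbF.
congr addb; last first.
  apply: eq_bigr => [[x y]] /andP [_]; rewrite negb_or => /andP [xv yv] /=.
  by rewrite !memr // !bef_rem.
rewrite vsplit.
have hx x : x != v -> [&& v \in s, x \in s & bef s v x != bef t v x] =
                     ((x \in s) && bef s x v) (+) ((x \in s) && bef t x v).
  move=> xv; case xs: (x \in s); last by rewrite andbF.
  have xt : x \in t by rewrite -(perm_mem st).
  rewrite vs (befN xs vs xv) (befN xt vt xv).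
  by case: (bef s x v); case: (bef t x v).
have hy z : z != v -> [&& z \in s, v \in s & bef s z v != bef t z v] =
                     ((z \in s) && bef s z v) (+) ((z \in s) && bef t z v).
  move=> zv; rewrite vs; case: (z \in s) => //=.
  by case: (bef s z v); case: (bef t z v).
have r1 x : rk (v, x) -> x != v by move/rk_neq; rewrite eq_sym.
have r2 x : rk (x, v) -> x != v by move/rk_neq.
set G := fun x => ((x \in s) && bef s x v) (+) ((x \in s) && bef t x v).
rewrite [X in X (+) _](eq_bigr G (fun x h => hx x (r1 x h))).
rewrite [X in _ (+) X](eq_bigr G (fun x h => hy x (r2 x h))).
rewrite [RHS](_ : _ = \big[addb/false]_(x | x != v) G x).
  rewrite [RHS](bigID (fun x => rk (v, x))) /=; congr addb; apply: eq_bigl => x.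
    case h: (rk (v, x)); last by rewrite andbF.
    by rewrite (r1 x h).
  rewrite /rk /=; case: (ltngtP (enum_rank x) (enum_rank v)) => //= E.
    by rewrite (r2 x E).
    by rewrite andbF.
  by move/val_inj: E => /enum_rank_inj ->; rewrite eqxx.
rewrite /G big_split /= !cnt_before //.
rewrite (eq_bigr (fun i => (i \in t) && bef t i v)) ?cnt_before // => i _.
by rewrite (perm_mem st).
Qed.

Lemma perm_rem_u s t v : uniq s -> perm_eq s t -> perm_eq (rem v s) (rem v t).
Proof.
move=> us st; have ut : uniq t by rewrite -(perm_uniq st).
apply: uniq_perm; rewrite ?rem_uniq // => x.
by rewrite !mem_rem_uniq // !inE (perm_mem st).
Qed.

Lemma edge (ord : {set V} -> seq V) (G B : {set V}) v cB :
  v \in B -> G = B :\ v -> uniq cB -> v \in cB ->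
  perm_eq (ord B) cB -> perm_eq (ord G) (rem v cB) ->
  incid_neg ord G B = Xp (ord B) cB (+) odd (index v cB) (+) Xp (rem v cB) (ord G).
Proof.
move=> vB GE ucB vcB pB pG.
have -> : incid_neg ord G B =
    odd (index v (ord B)) (+) ~~ agree (rem v (ord B)) (ord G).
  apply/existsP/idP => [[w /and3P [wB /eqP GEw H]] | H].
    have wv : w = v.
      apply/eqP; apply/negPn/negP => wv.
      have : w \in G by rewrite GE !inE wv.
      by rewrite GEw !inE eqxx.
    by rewrite -wv.
  by exists v; rewrite vB -GE eqxx.
have uoB : uniq (ord B) by rewrite (perm_uniq pB).
have voB : v \in ord B by rewrite (perm_mem pB).
have p1 : perm_eq (rem v (ord B)) (rem v cB) by apply: perm_rem_u.
have p2 : perm_eq (rem v cB) (ord G) by rewrite perm_sym.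
rewrite /agree negbK invX; last by apply: perm_trans p1 p2.
rewrite (XT p1 p2) (XR uoB voB pB).
move: (odd (index v (ord B))) (odd (index v cB)) (Xp (rem v (ord B)) (rem v cB))
  (Xp (rem v cB) (ord G)) => a b c d.
by case: a; case: b; case: c; case: d.
Qed.

Lemma perm_enum_seq (F : {set V}) s : uniq s -> (forall x, (x \in F) = (x \in s)) ->
  perm_eq (enum F) s.
Proof. by move=> us FE; apply: uniq_perm; rewrite ?enum_uniq // => x; rewrite mem_enum FE. Qed.

Section Edges.
Variables (ord : {set V} -> seq V) (R : {set V}) (x y : V).
Hypotheses (xy : x != y) (xR : x \notin R) (yR : y \notin R).
Hypothesis hB : perm_eq (ord (x |: (y |: R))) (enum (x |: (y |: R))).

Let cB := [:: x, y & enum R].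
Let ucB : uniq cB.
Proof. by rewrite /cB /= !inE !mem_enum negb_or xy xR yR enum_uniq. Qed.
Let pB : perm_eq (ord (x |: (y |: R))) cB.
Proof.
apply: (perm_trans hB); apply: (perm_enum_seq ucB) => z.
by rewrite !inE mem_enum.
Qed.

Lemma edgeA : perm_eq (ord (x |: R)) (enum (x |: R)) ->
  incid_neg ord (x |: R) (x |: (y |: R)) =
  Xp (ord (x |: (y |: R))) cB (+) true (+) Xp (x :: enum R) (ord (x |: R)).
Proof.
move=> hG.
have rE : rem y cB = x :: enum R by rewrite /cB /= (negbTE xy) eqxx.
have -> : true = odd (index y cB) by rewrite /cB /= (negbTE xy) eqxx.
rewrite -rE; apply: edge => //.
- by rewrite !inE eqxx orbT.
- apply/setP => z; rewrite !inE; case: (z =P y) => [->|_] //=.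
  by rewrite (negbTE yR) eq_sym (negbTE xy).
- by rewrite !inE eqxx orbT.
- rewrite rE; apply: (perm_trans hG); apply: perm_enum_seq => [|z].
    by rewrite /= mem_enum xR enum_uniq.
  by rewrite !inE mem_enum.
Qed.

Lemma edgeB : perm_eq (ord (y |: R)) (enum (y |: R)) ->
  incid_neg ord (y |: R) (x |: (y |: R)) =
  Xp (ord (x |: (y |: R))) cB (+) false (+) Xp (y :: enum R) (ord (y |: R)).
Proof.
move=> hG.
have rE : rem x cB = y :: enum R by rewrite /cB /= eqxx.
have -> : false = odd (index x cB) by rewrite /cB /= eqxx.
rewrite -rE; apply: edge => //.
- by rewrite !inE eqxx.
- apply/setP => z; rewrite !inE; case: (z =P x) => [->|_] //=.
  by rewrite (negbTE xR) (negbTE xy).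
- by rewrite !inE eqxx.
- rewrite rE; apply: (perm_trans hG); apply: perm_enum_seq => [|z].
    by rewrite /= mem_enum yR enum_uniq.
  by rewrite !inE mem_enum.
Qed.
End Edges.

Lemma neq_mem (A B : {set V}) z : z \in A -> z \notin B -> (A == B) = false.
Proof. by move=> zA zB; apply/eqP => E; move: zB; rewrite -E zA. Qed.

Lemma neq_card (A B : {set V}) : #|A| != #|B| -> (A == B) = false.
Proof. by apply: contraNF => /eqP ->. Qed.

Lemma badj (K : {set {set V}}) i (F H : {set V}) : F \in faces_of_size i K -> H \in faces_of_size i.+1 K ->
  F \subset H -> Badj K i F H && Badj K i H F.
Proof. by move=> hF hH sFH; rewrite /Badj hF hH sFH /= orbT. Qed.

Lemma hexagon (K : {set {set V}}) (i : nat) (ord : {set V} -> seq V) (R : {set V}) (a b c : V) :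
  (forall F : {set V}, F \subset a |: (b |: (c |: R)) -> F \in K) ->
  #|R| = i -> a != b -> b != c -> a != c ->
  a \notin R -> b \notin R -> c \notin R ->
  (forall F : {set V}, F \in K -> perm_eq (ord F) (enum F)) ->
  ~ balanced K i ord.
Proof.
move=> subK cR ab bc ac aR bR cR' hK bal.
have ba : b != a by rewrite eq_sym.
have cb : c != b by rewrite eq_sym.
have ca : c != a by rewrite eq_sym.
have c1 z : z \notin R -> #|z |: R| = i.+1 by move=> zR; rewrite cardsU1 zR cR.
have c2 z w : z != w -> z \notin R -> w \notin R -> #|z |: (w |: R)| = i.+2.
  by move=> zw zR wR; rewrite cardsU1 !inE negb_or zw zR /= c1.
have S1 z : z \notin R -> z \in a |: (b |: (c |: R)) -> z |: R \in faces_of_size i K.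
  move=> zR zT; rewrite inE c1 // eqxx andbT; apply: subK; apply/subsetP => u.
  rewrite !inE => /orP [/eqP ->|->]; last by rewrite !orbT.
  by move: zT; rewrite !inE.
have S2 z w : z != w -> z \notin R -> w \notin R -> z \in a |: (b |: (c |: R)) ->
    w \in a |: (b |: (c |: R)) -> z |: (w |: R) \in faces_of_size i.+1 K.
  move=> zw zR wR zT wT; rewrite inE c2 // eqxx andbT; apply: subK; apply/subsetP => u.
  rewrite !inE => /orP [/eqP ->|/orP [/eqP ->|->]]; last by rewrite !orbT.
    by move: zT; rewrite !inE.
  by move: wT; rewrite !inE.
have aT : a \in a |: (b |: (c |: R)) by rewrite !inE eqxx.
have bT : b \in a |: (b |: (c |: R)) by rewrite !inE eqxx orbT.
have cT : c \in a |: (b |: (c |: R)) by rewrite !inE eqxx !orbT.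
have sub1 z w : z |: R \subset z |: (w |: R).
  by apply/subsetP => u; rewrite !inE => /orP [->|->]; rewrite ?orbT.
have sub2 z w : w |: R \subset z |: (w |: R).
  by apply/subsetP => u; rewrite !inE => /orP [->|->]; rewrite ?orbT.
have FaS := S1 a aR aT; have FbS := S1 b bR bT; have FcS := S1 c cR' cT.
have HabS := S2 a b ab aR bR aT bT.
have HbcS := S2 b c bc bR cR' bT cT.
have HcaS := S2 c a ca cR' aR cT aT.
have [e1 e2] := andP (badj FaS HabS (sub1 a b)).
have [e3 e4] := andP (badj FbS HabS (sub2 a b)).
have [e5 e6] := andP (badj FbS HbcS (sub1 b c)).
have [e7 e8] := andP (badj FcS HbcS (sub2 b c)).
have [e9 e10] := andP (badj FcS HcaS (sub1 c a)).
have [e11 e12] := andP (badj FaS HcaS (sub2 c a)).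
have ncard z w z' : z != w -> z \notin R -> w \notin R -> z' \notin R ->
    (z' |: R == z |: (w |: R)) = false /\ (z |: (w |: R) == z' |: R) = false.
  move=> zw zR wR z'R; rewrite !neq_card // c1 // c2 //.
    by rewrite eqSS neq_ltn ltnSn orbT.
  by rewrite eqSS neq_ltn ltnSn.
have mk (z : V) (A B : {set V}) : z \in A -> z \notin B -> (A == B) = false /\ (B == A) = false.
  by move=> zA zB; rewrite (neq_mem zA zB) eq_sym (neq_mem zA zB).
have [d1 d1'] := ncard a b a ab aR bR aR.
have [d2 d2'] := ncard b c a bc bR cR' aR.
have [d3 d3'] := ncard c a a ca cR' aR aR.
have [d4 d4'] := ncard a b b ab aR bR bR.
have [d5 d5'] := ncard b c b bc bR cR' bR.
have [d6 d6'] := ncard c a b ca cR' aR bR.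
have [d7 d7'] := ncard a b c ab aR bR cR'.
have [d8 d8'] := ncard b c c bc bR cR' cR'.
have [d9 d9'] := ncard c a c ca cR' aR cR'.
have m1 : b \notin a |: R by rewrite !inE negb_or ba bR.
have m2 : c \notin a |: R by rewrite !inE negb_or ca cR'.
have m3 : c \notin b |: R by rewrite !inE negb_or cb cR'.
have m4 : a \notin b |: (c |: R) by rewrite !inE !negb_or ab ac aR.
have m5 : b \in a |: (b |: R) by rewrite !inE eqxx orbT.
have m6 : b \notin c |: (a |: R) by rewrite !inE !negb_or bc ba bR.
have [f1 f1'] := mk b (b |: R) _ (setU11 _ _) m1.
have [f2 f2'] := mk c (c |: R) _ (setU11 _ _) m2.
have [f3 f3'] := mk c (c |: R) _ (setU11 _ _) m3.
have [g1 g1'] := mk a (a |: (b |: R)) _ (setU11 _ _) m4.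
have [g2 g2'] := mk b _ _ m5 m6.
have [g3 g3'] := mk b (b |: (c |: R)) _ (setU11 _ _) m6.
move: (bal [:: a |: R; a |: (b |: R); b |: R; b |: (c |: R); c |: R; c |: (a |: R)]).
rewrite /= !inE !eqxx.
rewrite ?d1 ?d1' ?d2 ?d2' ?d3 ?d3' ?d4 ?d4' ?d5 ?d5' ?d6 ?d6' ?d7 ?d7' ?d8 ?d8' ?d9 ?d9'
  ?f1 ?f1' ?f2 ?f2' ?f3 ?f3' ?g1 ?g1' ?g2 ?g2' ?g3 ?g3' /=.
rewrite e1 e4 e5 e8 e9 e12 /=.
move=> /(_ isT isT isT).
have neqi : (i.+2 == i.+1) = false by elim: i {cR c1 c2 S1 S2 FaS FbS FcS HabS HbcS HcaS e1 e2 e3 e4 e5 e6 e7 e8 e9 e10 e11 e12 bal}.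
have nS z w : z != w -> z \notin R -> w \notin R ->
   (z |: (w |: R) \in faces_of_size i K) = false.
  by move=> zw zR wR; rewrite inE c2 // neqi andbF.
have inKS (F : {set V}) j : F \in faces_of_size j K -> F \in K.
  by rewrite inE => /andP [].
rewrite /Bneg FaS FbS FcS (nS a b) // (nS b c) // (nS c a) //.
rewrite (edgeA ab aR bR (hK _ (inKS _ _ HabS)) (hK _ (inKS _ _ FaS))).
rewrite (edgeB ab aR bR (hK _ (inKS _ _ HabS)) (hK _ (inKS _ _ FbS))).
rewrite (edgeA bc bR cR' (hK _ (inKS _ _ HbcS)) (hK _ (inKS _ _ FbS))).
rewrite (edgeB bc bR cR' (hK _ (inKS _ _ HbcS)) (hK _ (inKS _ _ FcS))).
rewrite (edgeA ca cR' aR (hK _ (inKS _ _ HcaS)) (hK _ (inKS _ _ FcS))).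
rewrite (edgeB ca cR' aR (hK _ (inKS _ _ HcaS)) (hK _ (inKS _ _ FaS))).
rewrite !oddD !oddb /=.
move: (Xp (a :: enum R) (ord (a |: R))) (Xp (b :: enum R) (ord (b |: R)))
  (Xp (c :: enum R) (ord (c |: R))) (Xp (ord (a |: (b |: R))) [:: a, b & enum R])
  (Xp (ord (b |: (c |: R))) [:: b, c & enum R]) (Xp (ord (c |: (a |: R))) [:: c, a & enum R]).
by do 6![case].
Qed.

Lemma sub_card (A : {set V}) k : k <= #|A| -> exists2 B : {set V}, B \subset A & #|B| = k.
Proof.
move=> kA; exists [set x in take k (enum A)].
  by apply/subsetP => x; rewrite inE => /mem_take; rewrite mem_enum.
rewrite cardsE (card_uniqP _) ?take_uniq ?enum_uniq // size_take -cardE.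
by case: ltngtP kA => // ->.
Qed.

Lemma max_face (K : {set {set V}}) : is_complex K -> has_vertex K ->
  exists2 F, F \in K & #|F| = (dim K).+1.
Proof.
move=> [K0 _] [v Kv].
have [|F FK E] := @eq_bigmax_cond _ (mem K) (fun F : {set V} => #|F|).
  by rewrite card_gt0; apply/set0Pn; exists set0.
exists F => //; rewrite /dim E prednK //.
have := @leq_bigmax_cond _ (mem K) (fun F : {set V} => #|F|) _ Kv; rewrite E cards1 => h.
exact: h.
Qed.
End Par.

Theorem mainTheorem9 (V : finType) (K1 K2 : {set {set V}}) (i : nat) :
  is_complex K1 -> is_complex K2 ->
  has_vertex K1 -> has_vertex K2 ->
  [disjoint vertices K1 & vertices K2] ->
  i.+1 <= dim K1 + dim K2 ->
  forall ord : {set V} -> seq V, is_orientation (join K1 K2) ord ->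
    ~ balanced (join K1 K2) i ord.
Proof.
move=> cK1 cK2 hv1 hv2 dis hdim ord hor.
have [F1 F1K c1] := max_face cK1 hv1.
have [F2 F2K c2] := max_face cK2 hv2.
have d12 : [disjoint F1 & F2].
  apply: (disjointW _ _ dis); rewrite /vertices.
    exact: (bigcup_sup F1 F1K).
  exact: (bigcup_sup F2 F2K).
have cT : #|F1 :|: F2| = (dim K1).+1 + (dim K2).+1.
  by have := (leq_card_setU F1 F2).2; rewrite d12 c1 c2 => /eqP.
have subJ (G : {set V}) : G \subset F1 :|: F2 -> G \in join K1 K2.
  move=> sG; apply/imset2P; exists (G :&: F1) (G :&: F2).
  - by apply: cK1.2 F1K _; apply: subsetIr.
  - by apply: cK2.2 F2K _; apply: subsetIr.
  - by rewrite -setIUr; apply/esym/setIidPl.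
have [T sT cT'] : exists2 T : {set V}, T \subset F1 :|: F2 & #|T| = i.+3.
  by apply: sub_card; rewrite cT addSn addnS !ltnS.
have [a aT] : exists a, a \in T by apply/set0Pn; rewrite -card_gt0 cT'.
have [b bT] : exists b, b \in T :\ a.
  by apply/set0Pn; rewrite -card_gt0; move: cT'; rewrite (cardsD1 a) aT add1n => -[->].
have [c cT2] : exists c, c \in T :\ a :\ b.
  apply/set0Pn; rewrite -card_gt0; move: cT'.
  by rewrite (cardsD1 a) aT (cardsD1 b (T :\ a)) bT !add1n => -[->].
set R := T :\ a :\ b :\ c.
have cR : #|R| = i.
  move: cT'; rewrite (cardsD1 a) aT (cardsD1 b (T :\ a)) bT.
  by rewrite (cardsD1 c (T :\ a :\ b)) cT2 !add1n => -[].
have TE : a |: (b |: (c |: R)) = T by rewrite /R !setD1K.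
move: bT cT2; rewrite !inE => /andP [ba bT] /and3P [cb ca cT2].
apply: (@hexagon _ _ i ord R a b c).
- by move=> F sF; apply: subJ; apply: subset_trans sT; rewrite -TE.
- exact: cR.
- by rewrite eq_sym.
- by rewrite eq_sym.
- by rewrite eq_sym.
- by rewrite /R !inE eqxx !andbF.
- by rewrite /R !inE eqxx !andbF.
- by rewrite /R !inE eqxx.
- by move=> F FJ; apply: hor.
Qed.
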